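(* Let $R$ be a right artinian ring. Then every factor ring $\bar R$ of $R$ has the property that every right $\bar R$-module of finite length is a homomorphic image of an injective right $\bar R$-module if and only if every factor ring of $R$ is QF.
   Context: A ring is QF if it is right noetherian and right self-injective. *)

(* Defs.v *)
From mathcomp Require Import all_boot all_algebra.
Set Implicit Arguments. Unset Strict Implicit. Unset Printing Implicit Defensive.
Import GRing.Theory.
Local Open Scope ring_scope.

(* Rings are unital, possibly noncommutative (pzRingType allows the zero ring,
   which is the factor ring R/R).  A RIGHT S-module is a left module over the
   converse ring S^c, i.e. an [lmodType S^c]: a *: m stands for m.a . *)

Definition subset_of (T : Type) (A B : T -> Prop) := forall x, A x -> B x.
Definition same_set (T : Type) (A B : T -> Prop) := forall x, A x <-> B x.

Definition right_ideal (S : pzRingType) (I : S -> Prop) :=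
  [/\ I 0, (forall x y, I x -> I y -> I (x + y)) &
      (forall x r, I x -> I (x * r))].

Definition right_artinian (S : pzRingType) :=
  forall I : nat -> S -> Prop,
    (forall n, right_ideal (I n)) ->
    (forall n, subset_of (I n.+1) (I n)) ->
    exists N, forall n, (N <= n)%N -> same_set (I n) (I N).

Definition right_noetherian (S : pzRingType) :=
  forall I : nat -> S -> Prop,
    (forall n, right_ideal (I n)) ->
    (forall n, subset_of (I n) (I n.+1)) ->
    exists N, forall n, (N <= n)%N -> same_set (I n) (I N).

Definition rhom (S : pzRingType) (A B : lmodType S^c) (f : A -> B) := linear f.

Definition injective_module (S : pzRingType) (E : lmodType S^c) :=
  forall (A B : lmodType S^c) (f : A -> B) (g : A -> E),
    rhom f -> injective f -> rhom g ->
    exists h : B -> E, rhom h /\ (forall a, h (f a) = g a).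

(* Right self-injective: S_S (the regular right module, (S^c)^o) is injective. *)
Definition right_self_injective (S : pzRingType) :=
  injective_module ((S^c)^o : lmodType S^c).

Definition QF (S : pzRingType) := right_noetherian S /\ right_self_injective S.

Definition submodule (S : pzRingType) (M : lmodType S^c) (N : M -> Prop) :=
  [/\ N 0, (forall x y, N x -> N y -> N (x + y)) &
      (forall (a : S^c) x, N x -> N (a *: x))].

Definition finite_length (S : pzRingType) (M : lmodType S^c) :=
  exists (n : nat) (C : nat -> M -> Prop),
    [/\ forall i, submodule (C i),
        same_set (C 0%N) (fun x => x = 0),
        same_set (C n) (fun _ => True) &
        forall i, (i < n)%N ->
          [/\ subset_of (C i) (C i.+1),
              ~ subset_of (C i.+1) (C i) &
              forall N : M -> Prop, submodule N ->
                subset_of (C i) N -> subset_of N (C i.+1) ->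
                same_set N (C i) \/ same_set N (C i.+1)]].

Definition image_of_injective (S : pzRingType) (M : lmodType S^c) :=
  exists (E : lmodType S^c) (p : E -> M),
    injective_module E /\ rhom p /\ (forall m, exists e, p e = m).

Definition fl_images_of_injectives (S : pzRingType) :=
  forall M : lmodType S^c, finite_length M -> image_of_injective M.

(* A factor ring of R is represented (up to isomorphism) as the codomain of a
   surjective ring homomorphism R -> S. *)
Definition factor_ring (R S : pzRingType) (f : {rmorphism R -> S}) :=
  forall s : S, exists r : R, f r = s.

(* Main.v *)
Require Import Defs.
From mathcomp Require Import all_boot all_algebra.
From mathcomp Require classical_sets.
From Stdlib Require Import Classical ClassicalEpsilon FunctionalExtensionality PropExtensionality.
Set Implicit Arguments. Unset Strict Implicit. Unset Printing Implicit Defensive.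
Import GRing.Theory.
Local Open Scope ring_scope.

Lemma setE (T : Type) (A B : T -> Prop) : same_set A B -> A = B.
Proof.
move=> H; apply: functional_extensionality => x.
by apply: propositional_extensionality; apply: H.
Qed.

Lemma set_ext (T : Type) (A B : T -> Prop) :
  subset_of A B -> subset_of B A -> A = B.
Proof. by move=> H1 H2; apply: setE => x; split; [apply: H1|apply: H2]. Qed.

Section RingPart.
Variable S : pzRingType.
Implicit Types A B C K N : S -> Prop.

Definition rid A := right_ideal A.
Definition full : S -> Prop := fun _ => True.
Definition zero : S -> Prop := fun x => x = 0.
Definition plus A B : S -> Prop := fun x => exists a b, A a /\ B b /\ x = a + b.
Definition inter A B : S -> Prop := fun x => A x /\ B x.

Lemma rid0 A : rid A -> A 0. Proof. by case. Qed.
Lemma ridD A x y : rid A -> A x -> A y -> A (x + y).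
Proof. by case=> _ H _; apply: H. Qed.
Lemma ridM A x r : rid A -> A x -> A (x * r).
Proof. by case=> _ _ H; apply: H. Qed.
Lemma ridN A x : rid A -> A x -> A (- x).
Proof. by move=> HA Ax; rewrite -mulrN1; apply: ridM. Qed.
Lemma ridB A x y : rid A -> A x -> A y -> A (x - y).
Proof. by move=> HA Ax Ay; apply: ridD => //; apply: ridN. Qed.

Lemma rid_full : rid full. Proof. by split. Qed.
Lemma rid_zero : rid zero.
Proof. split; rewrite /zero //; first by move=> x y -> ->; rewrite addr0.
by move=> x r ->; rewrite mul0r. Qed.

Lemma rid_plus A B : rid A -> rid B -> rid (plus A B).
Proof.
move=> HA HB; split.
- by exists 0, 0; rewrite addr0; split; [apply: rid0|split; [apply: rid0|]].
- move=> x y [a [b [Aa [Bb ->]]]] [a' [b' [Aa' [Bb' ->]]]].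
  exists (a + a'), (b + b'); split; first by apply: ridD.
  split; first by apply: ridD.
  by rewrite addrACA.
- move=> x r [a [b [Aa [Bb ->]]]]; exists (a * r), (b * r).
  by rewrite mulrDl; split; [apply: ridM|split; [apply: ridM|]].
Qed.

Lemma rid_inter A B : rid A -> rid B -> rid (inter A B).
Proof.
move=> HA HB; split.
- by split; apply: rid0.
- by move=> x y [? ?] [? ?]; split; apply: ridD.
- by move=> x r [? ?]; split; apply: ridM.
Qed.

Definition step A B := [/\ rid A, rid B, subset_of A B &
  forall N, rid N -> subset_of A N -> subset_of N B -> N = A \/ N = B].

Inductive fl : (S -> Prop) -> (S -> Prop) -> Prop :=
| flR A : rid A -> fl A A
| flS A B C : fl A B -> step B C -> fl A C.

Lemma fl_prop A B : fl A B -> [/\ rid A, rid B & subset_of A B].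
Proof.
elim=> [A' HA|A' B' C' _ [H1 H2 H3] [H4 H5 H6 _]]; first by split.
by split=> // x /H3 /H6.
Qed.

Lemma fl_trans A B C : fl A B -> fl B C -> fl A C.
Proof.
move=> HAB HBC; elim: HBC HAB => [//|B' C' D' _ IH st] HAB.
by apply: flS st; apply: IH.
Qed.

Lemma chain_up (Nc : nat -> S -> Prop) :
  (forall n, subset_of (Nc n) (Nc n.+1)) ->
  forall m n, (m <= n)%N -> subset_of (Nc m) (Nc n).
Proof.
move=> H m n; elim: n => [|n IH]; first by rewrite leqn0 => /eqP ->.
rewrite leq_eqVlt => /orP [/eqP -> //|]; rewrite ltnS => /IH H1 x /H1; apply: H.
Qed.

Lemma chain_down (Nc : nat -> S -> Prop) :
  (forall n, subset_of (Nc n.+1) (Nc n)) ->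
  forall m n, (m <= n)%N -> subset_of (Nc n) (Nc m).
Proof.
move=> H m n; elim: n => [|n IH]; first by rewrite leqn0 => /eqP ->.
rewrite leq_eqVlt => /orP [/eqP -> //|]; rewrite ltnS => /IH H1 x /H /H1 //.
Qed.

Lemma modular X Y B : rid X -> rid Y -> rid B -> subset_of X Y ->
  inter X B = inter Y B -> plus X B = plus Y B -> X = Y.
Proof.
move=> HX HY HB XY EI EP; apply: set_ext => // y Yy.
have : plus Y B y by exists y, 0; split=> //; split; [apply: rid0|rewrite addr0].
rewrite -EP => -[x [b [Xx [Bb Ey]]]].
have : inter Y B b.
  split=> //; have -> : b = y - x by rewrite Ey addrC addKr.
  by apply: ridB => //; apply: XY.
rewrite -EI => -[Xb _]; rewrite Ey; exact: ridD.
Qed.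

Lemma fl_acc A B : fl A B -> forall Nc : nat -> S -> Prop,
  (forall n, rid (Nc n)) -> (forall n, subset_of (Nc n) (Nc n.+1)) ->
  (forall n, subset_of A (Nc n)) -> (forall n, subset_of (Nc n) B) ->
  exists m, forall n, (m <= n)%N -> Nc n = Nc m.
Proof.
elim=> [A' HA|A' B' C' HAB IH [HB HC BC stp]] Nc Hr Hup HA' HB'.
  exists 0%N => n _.
  have E k : Nc k = A' by apply: set_ext; [apply: HB'|apply: HA'].
  by rewrite !E.
have [HA _ AB] := fl_prop HAB.
have [m1 Hm1] := IH (fun n => inter (Nc n) B') (fun n => rid_inter (Hr n) HB)
   (fun n x Hx => conj (Hup n x Hx.1) Hx.2)
   (fun n x Hx => conj (HA' n x Hx) (AB x Hx)) (fun n x Hx => Hx.2).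
have Pr n : rid (plus (Nc n) B') by apply: rid_plus.
have PB n : subset_of B' (plus (Nc n) B').
  move=> x Bx; exists 0, x; split; first exact: rid0.
  by split=> //; rewrite add0r.
have PC n : subset_of (plus (Nc n) B') C'.
  move=> x [a [b [Na [Bb ->]]]]; apply: (ridD HC); first exact: (HB' n).
  exact: BC.
have Pmono m n : (m <= n)%N -> subset_of (plus (Nc m) B') (plus (Nc n) B').
  move=> mn x [a [b [Na [Bb ->]]]]; exists a, b; split=> //.
  exact: (chain_up Hup mn).
have [m2 Hm2] : exists m2, forall n, (m2 <= n)%N ->
    plus (Nc n) B' = plus (Nc m2) B'.
  case: (classic (exists n0, plus (Nc n0) B' = C')) => [[n0 E0]|nE].
    exists n0 => n le; rewrite E0; apply: set_ext; first exact: PC.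
    by rewrite -E0; apply: Pmono.
  exists 0%N => n _.
  have E n' : plus (Nc n') B' = B'.
    case: (stp _ (Pr n') (PB n') (PC n')) => // E.
    by case: nE; exists n'.
  by rewrite !E.
exists (maxn m1 m2) => n le.
have l1 : (m1 <= maxn m1 m2)%N by rewrite leq_maxl.
have l2 : (m2 <= maxn m1 m2)%N by rewrite leq_maxr.
symmetry; apply: (modular (Hr _) (Hr _) HB); first exact: chain_up.
  have -> : inter (Nc n) B' = inter (Nc m1) B' by apply: Hm1; apply: leq_trans le.
  by apply: Hm1.
have -> : plus (Nc n) B' = plus (Nc m2) B' by apply: Hm2; apply: leq_trans le.
by apply: Hm2.
Qed.
End RingPart.

Section Art.
Variable S : pzRingType.
Variable Hart : right_artinian S.
Implicit Types A B C K N : S -> Prop.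

Lemma dcc_min (P : (S -> Prop) -> Prop) : (exists I, rid I /\ P I) ->
  exists I, [/\ rid I, P I & forall K, rid K -> P K -> subset_of K I -> K = I].
Proof.
move=> [I0 [HI0 PI0]]; apply: NNPP => Hn.
have H : forall I, rid I -> P I -> exists K, [/\ rid K, P K, subset_of K I & K <> I].
  move=> I HI PI; apply: NNPP => Hk; apply: Hn; exists I; split => // K HK PK KI.
  by apply: NNPP => ne; apply: Hk; exists K; split.
pose T := {I : S -> Prop | rid I /\ P I}.
have nxt : forall t : T, {t' : T | subset_of (sval t') (sval t) /\ sval t' <> sval t}.
  move=> [I [HI PI]].
  have /constructive_indefinite_description [K [HK PK KI ne]] := H I HI PI.
  by exists (exist _ K (conj HK PK)).
pose sq n := iter n (fun t => sval (nxt t)) (exist _ I0 (conj HI0 PI0) : T).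
have [N HN] := @Hart (fun n => sval (sq n)) (fun n => (svalP (sq n)).1)
   (fun n => (svalP (nxt (sq n))).1).
have E := setE (HN N.+1 (leqnSn N)).
exact: (svalP (nxt (sq N))).2 E.
Qed.

Definition maxr m := [/\ rid m, ~ m 1 &
  forall N, rid N -> subset_of m N -> subset_of N m \/ N 1].

Lemma one_full N x : rid N -> N 1 -> N x.
Proof. by move=> HN N1; rewrite -(mul1r x); apply: ridM. Qed.

Lemma exists_max P0 : rid P0 -> ~ P0 1 -> exists m, maxr m /\ subset_of P0 m.
Proof.
move=> HP0 nP0.
pose P : classical_sets.set (classical_sets.set S) := fun K =>
  (rid K /\ subset_of P0 K /\ ~ K 1) \/ (forall x, ~ K x).
have Pne X x : P X -> X x -> [/\ rid X, subset_of P0 X & ~ X 1].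
  by case=> [[? [? ?]]|H] Xx //; case: (H x).
have [A [PA Amax]] : exists A, P A /\
    (forall B, classical_sets.proper A B -> ~ P B).
  apply: classical_sets.Zorn_bigcup => F FP Ftot.
  case: (classic (exists X, F X /\ exists x, X x)) => [[X0 [FX0 [x0 X0x0]]]|none];
    last first.
    by right=> x [X FX Xx]; apply: none; exists X; split=> //; exists x.
  have [HX0 PX0 nX0] := Pne _ _ (FP _ FX0) X0x0.
  left; split; [split|split].
  - by exists X0 => //; apply: rid0.
  - move=> x y [X1 FX1 X1x] [X2 FX2 X2y].
    case: (Ftot _ _ FX1 FX2) => sub.
      have [H2 _ _] := Pne _ _ (FP _ FX2) X2y.
      by exists X2 => //; apply: ridD => //; apply: sub.
    have [H1 _ _] := Pne _ _ (FP _ FX1) X1x.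
    by exists X1 => //; apply: ridD => //; apply: sub.
  - move=> x r [X1 FX1 X1x]; have [H1 _ _] := Pne _ _ (FP _ FX1) X1x.
    by exists X1 => //; apply: ridM.
  - by move=> x /PX0 H; exists X0.
  - move=> [X1 FX1 X11]; have [_ _ H] := Pne _ _ (FP _ FX1) X11; exact: H.
case: PA => [[HA [PA nA]]|emp]; last first.
  exfalso; apply: (Amax P0); last by left; split=> //; split=> // x.
  split; first by move=> x /emp.
  by move=> H; apply: (emp 0); apply: H; apply: rid0.
exists A; split=> //; split=> // N HN AN.
case: (classic (N 1)) => N1; [by right|left].
apply: NNPP => nNA; apply: (Amax N); first by split.
by left; split=> //; split=> // x /PA /AN.
Qed.

Definition colon m s : S -> Prop := fun t => m (s * t).

Lemma colon_rid m s : rid m -> rid (colon m s).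
Proof.
move=> Hm; split; rewrite /colon.
- by rewrite mulr0; apply: rid0.
- by move=> x y Hx Hy; rewrite mulrDr; apply: ridD.
- by move=> x r Hx; rewrite mulrA; apply: ridM.
Qed.

Definition cyc z : S -> Prop := fun x => exists s, x = z * s.

Lemma rid_cyc z : rid (cyc z).
Proof.
split.
- by exists 0; rewrite mulr0.
- by move=> x y [s ->] [s' ->]; exists (s + s'); rewrite mulrDr.
- by move=> x r [s ->]; exists (s * r); rewrite mulrA.
Qed.

Lemma colon_max m s : maxr m -> ~ m s -> maxr (colon m s).
Proof.
move=> [Hm nm1 mmax] nms; split; first exact: colon_rid.
  by rewrite /colon mulr1.
move=> N HN cN; case: (classic (subset_of N (colon m s))) => [H|H]; [by left|right].
have [n [Nn nn]] : exists n, N n /\ ~ colon m s n.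
  by apply: NNPP => nex; apply: H => x Nx; apply: NNPP => nx; apply: nex; exists x.
pose K := plus m (fun x => exists n', N n' /\ x = s * n').
have HK : rid K.
  apply: rid_plus => //; split.
  - by exists 0; split; [apply: rid0|rewrite mulr0].
  - by move=> x y [a [Na ->]] [b [Nb ->]]; exists (a + b); rewrite mulrDr; split => //; apply: ridD.
  - by move=> x r [a [Na ->]]; exists (a * r); rewrite mulrA; split => //; apply: ridM.
case: (mmax K HK).
- by move=> x mx; exists x, 0; split=> //; split; [exists 0; rewrite mulr0; split=> //; apply: rid0|rewrite addr0].
- move=> Km; exfalso; apply: nn; apply: Km.
  by exists 0, (s * n); split; [apply: rid0|split; [exists n|rewrite add0r]].
move=> K1; have : K s by apply: one_full.
move=> [t [b [mt [[n' [Nn' ->]] E]]]].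
have : colon m s (1 - n') by rewrite /colon mulrBr mulr1 {1}E addrK.
move=> /cN H1; have -> : (1 : S) = (1 - n') + n' by rewrite subrK.
exact: ridD.
Qed.

Fixpoint fint (l : seq (S -> Prop)) : S -> Prop :=
  if l is m :: l' then inter m (fint l') else (fun _ => True).
Fixpoint allmax (l : seq (S -> Prop)) : Prop :=
  if l is m :: l' then maxr m /\ allmax l' else True.

Lemma fint_rid l : allmax l -> rid (fint l).
Proof.
elim: l => [|m l IH] /=; first by move=> _; apply: rid_full.
by move=> [[Hm _ _] /IH H]; apply: rid_inter.
Qed.

Lemma fint_all l x : allmax l -> (forall m, maxr m -> m x) -> fint l x.
Proof. by elim: l => [|m l IH] //= [Hm Hl] H; split; [apply: H|apply: IH]. Qed.

Lemma J_exists : exists l, allmax l /\ (forall m, maxr m -> subset_of (fint l) m).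
Proof.
have [I [HI [l [Hl ->]] Imin]] := @dcc_min (fun K => exists l, allmax l /\ K = fint l)
  (ex_intro _ (@full S) (conj (@rid_full S) (ex_intro _ [::] (conj I erefl)))).
exists l; split=> // m Hm.
have E := Imin (fint (m :: l)) (fint_rid (l:=m::l) (conj Hm Hl))
  (ex_intro _ (m :: l) (conj (conj Hm Hl) erefl)) (fun x Hx => Hx.2).
by rewrite -E => x [].
Qed.

End Art.

Section Acl.
Variable S : pzRingType.
Implicit Types A B C K N X Y : S -> Prop.

Definition acl X : S -> Prop := fun z => forall K, K 0 ->
  (forall a b, K a -> K b -> K (a + b)) -> subset_of X K -> K z.

Lemma acl_in X x : X x -> acl X x.
Proof. by move=> Xx K _ _ H; apply: H. Qed.
Lemma acl0 X : acl X 0. Proof. by move=> K. Qed.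
Lemma aclD X x y : acl X x -> acl X y -> acl X (x + y).
Proof. by move=> Hx Hy K K0 KD KX; apply: (KD); [exact: (Hx K K0 KD KX)|exact: (Hy K K0 KD KX)]. Qed.
Lemma acl_ind X K : K 0 -> (forall a b, K a -> K b -> K (a + b)) ->
  subset_of X K -> subset_of (acl X) K.
Proof. by move=> K0 KD KX z Hz; apply: Hz. Qed.
Lemma acl_sub_rid X K : rid K -> subset_of X K -> subset_of (acl X) K.
Proof.
move=> HK XK; apply: acl_ind => //; first exact: rid0.
by move=> a b; apply: ridD.
Qed.

Lemma acl_rid X : (forall x r, X x -> X (x * r)) -> rid (acl X).
Proof.
move=> HX; split; [exact: acl0|exact: aclD|].
move=> x r; apply: (@acl_ind X (fun z => acl X (z * r))).
- by rewrite mul0r; apply: acl0.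
- by move=> a b Ha Hb; rewrite mulrDl; apply: aclD.
- by move=> y Xy; apply: acl_in; apply: HX.
Qed.

Definition prd X Y : S -> Prop := fun z => exists x y, X x /\ Y y /\ z = x * y.

Lemma prd_rclosed X Y : rid Y -> forall z r, prd X Y z -> prd X Y (z * r).
Proof. by move=> HY z r [x [y [Xx [Yy ->]]]]; exists x, (y * r); rewrite mulrA; split=> //; split=> //; apply: ridM. Qed.

End Acl.

Section JSec.
Variable S : pzRingType.
Variable Hart : right_artinian S.
Variable l0 : seq (S -> Prop).
Variable Hl0 : allmax l0.
Variable HJ : forall m, maxr m -> subset_of (fint l0) m.
Implicit Types A B C K N X Y : S -> Prop.

Definition J := fint l0.
Lemma J_rid : rid J. Proof. exact: fint_rid. Qed.

Lemma J_left s y : J y -> J (s * y).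
Proof.
move=> Jy; apply: fint_all => // m Hm.
case: (classic (m s)) => ms.
  by have [Hr _ _] := Hm; apply: ridM.
have := HJ (colon_max Hm ms) Jy; done.
Qed.

Lemma J_unit y : J y -> exists v, (1 - y) * v = 1.
Proof.
move=> Jy; pose P0 := cyc (1 - y).
case: (classic (P0 1)) => [[v E]|nP]; first by exists v.
have [m [Hm P0m]] := exists_max (rid_cyc (1 - y)) nP.
have [Hr n1 _] := Hm; exfalso; apply: n1.
have -> : (1 : S) = (1 - y) + y by rewrite subrK.
apply: ridD => //; last by apply: HJ.
by apply: P0m; exists 1; rewrite mulr1.
Qed.

Fixpoint L n : S -> Prop :=
  if n is n'.+1 then acl (prd (L n') J) else (fun _ => True).

Lemma L_rid n : rid (L n).
Proof.
case: n => [|n] /=; first exact: rid_full.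
by apply: acl_rid; apply: prd_rclosed; apply: J_rid.
Qed.

Lemma L_down n : subset_of (L n.+1) (L n).
Proof.
apply: acl_sub_rid; first exact: L_rid.
by move=> z [x [y [Lx [Jy ->]]]]; apply: ridM => //; apply: L_rid.
Qed.

Lemma L_mul m n : subset_of (L (m + n)) (acl (prd (L m) (L n))).
Proof.
elim: n => [|n IH].
  by rewrite addn0 => x Lx; apply: acl_in; exists x, 1; rewrite mulr1.
rewrite addnS /=; apply: acl_ind; [exact: acl0|move=> a b; apply: aclD|].
move=> w [x [j [Lx [Jj ->]]]].
apply: (acl_ind (K := fun w => acl (prd (L m) (acl (prd (L n) J))) (w * j)) _ _ _ (IH x Lx)).
- by rewrite mul0r; apply: acl0.
- by move=> a b Ha Hb; rewrite mulrDl; apply: aclD.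
- move=> z [y [z' [Ly [Lz' ->]]]]; apply: acl_in; exists y, (z' * j).
  by rewrite mulrA; split=> //; split=> //; apply: acl_in; exists z', j.
Qed.

Lemma L1_J : subset_of (L 1) J.
Proof.
apply: acl_sub_rid; first exact: J_rid.
by move=> z [x [y [_ [Jy ->]]]]; apply: J_left.
Qed.

Lemma L_nil : exists k, forall x, L k x -> x = 0.
Proof.
have [N0 HN0] := @Hart L L_rid L_down.
pose k := N0.+1.
have Lk n : (k <= n)%N -> L n = L k.
  move=> le; rewrite (setE (HN0 n (leq_trans (leqnSn _) le))).
  by rewrite (setE (HN0 k (leqnSn _))).
exists k; set I := L k.
have IJ : subset_of I J.
  by move=> x Ix; apply: L1_J; apply: (chain_down L_down (n:=k) (isT : (1 <= k)%N)).
have II : subset_of I (acl (prd I I)).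
  by move=> x Ix; apply: L_mul; rewrite Lk ?leq_addr.
have HI : rid I by apply: L_rid.
move=> x0 Ix0; apply: NNPP => nx0.
have ne0 : exists K, rid K /\ (exists a z, K a /\ I z /\ a * z <> 0).
  exists (fun _ => True); split; first exact: rid_full.
  by exists 1, x0; split=> //; split=> //; rewrite mul1r.
have [A [HA [a [z [Aa [Iz az]]]] Amin]] :=
  @dcc_min S Hart (fun K => exists a z, K a /\ I z /\ a * z <> 0) ne0.
have [z1 [z2 [I1 [I2 n12]]]] : exists z1 z2, I z1 /\ I z2 /\ a * (z1 * z2) <> 0.
  apply: NNPP => nex; apply: az.
  apply: (acl_ind (K := fun w => a * w = 0) _ _ _ (II z Iz)).
  - by rewrite mulr0.
  - by move=> u v Hu Hv; rewrite mulrDr Hu Hv addr0.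
  - move=> w [u [v [Iu [Iv ->]]]]; apply: NNPP => ne; apply: nex.
    by exists u, v.
pose aI : S -> Prop := fun w => exists y, I y /\ w = a * y.
have HaI : rid aI.
  split.
  - by exists 0; rewrite mulr0; split=> //; apply: (rid0 HI).
  - by move=> u v [y [Iy ->]] [y' [Iy' ->]]; exists (y + y'); rewrite mulrDr; split=> //; apply: (ridD HI).
  - by move=> u r [y [Iy ->]]; exists (y * r); rewrite mulrA; split=> //; apply: (ridM _ HI).
have PaI : exists a' z', aI a' /\ I z' /\ a' * z' <> 0.
  by exists (a * z1), z2; split; [exists z1|split=> //; rewrite -mulrA].
have aIA : subset_of aI A by move=> w [y [Iy ->]]; apply: ridM.
have E := Amin aI HaI PaI aIA.
have : aI a by rewrite E.
move: E => _ [y [Iy Ey]].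
have [v Hv] := J_unit (IJ y Iy).
apply: az.
have -> : a = 0.
  by rewrite -[a]mulr1 -Hv mulrA mulrBr mulr1 -Ey subrr mul0r.
by rewrite mul0r.
Qed.

End JSec.

Section Layer.
Variable S : pzRingType.
Implicit Types A B C K N X Y F : S -> Prop.

Definition gen A z := exists m, maxr m /\ forall t, m t -> A (z * t).

Lemma gen_step A F z : rid F -> subset_of A F -> gen A z ->
  step F (plus F (cyc z)).
Proof.
move=> HF AF [m [[Hm nm1 mmax] Hz]].
have Hp := rid_plus HF (rid_cyc z).
split=> //.
  by move=> x Fx; exists x, 0; split=> //; split; [apply: (rid0 (rid_cyc z))|rewrite addr0].
move=> N HN FN NP.
pose T : S -> Prop := fun s => N (z * s).
have HT : rid T.
  split; rewrite /T.
  - by rewrite mulr0; apply: rid0.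
  - by move=> x y Hx Hy; rewrite mulrDr; apply: ridD.
  - by move=> x r Hx; rewrite mulrA; apply: ridM.
case: (mmax T HT).
- by move=> t mt; apply: FN; apply: AF; apply: Hz.
- move=> Tm; left; apply: set_ext => // n Nn.
  have [f [b [Ff [[s ->] En]]]] := NP n Nn.
  have Ts : T s.
    rewrite /T; have -> : z * s = n - f by rewrite En addrC addKr.
    by apply: ridB => //; apply: FN.
  by rewrite En; apply: ridD => //; apply: AF; apply: Hz; apply: Tm.
- move=> T1; right; apply: set_ext => //.
  move=> x [f [b [Ff [[s ->] ->]]]]; apply: ridD => //; first by apply: FN.
  by move: T1; rewrite /T mulr1 => Nz; apply: ridM.
Qed.

Lemma gen_colon A F z s : rid F -> subset_of A F -> gen A z ->
  F (z * s) -> ~ F z -> A (z * s).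
Proof.
move=> HF AF [m [[Hm nm1 mmax] Hz]] Fzs nFz.
pose T : S -> Prop := fun s => F (z * s).
have HT : rid T.
  split; rewrite /T.
  - by rewrite mulr0; apply: rid0.
  - by move=> x y Hx Hy; rewrite mulrDr; apply: ridD.
  - by move=> x r Hx; rewrite mulrA; apply: ridM.
case: (mmax T HT).
- by move=> t mt; apply: AF; apply: Hz.
- by move=> Tm; apply: Hz; apply: Tm.
- by rewrite /T mulr1.
Qed.

Definition SG A B := acl (fun x => A x \/ (B x /\ gen A x)).

Lemma in_SG A B l : rid A -> rid B -> allmax l -> forall x, B x ->
  (forall j, fint l j -> A (x * j)) -> SG A B x.
Proof.
move=> HA HB; elim: l => [|m l IH] /=.
  by move=> _ x Bx Hx; apply: acl_in; left; rewrite -[x]mulr1; apply: Hx.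
move=> [Hm Hl] x Bx Hx.
have Hfl := fint_rid Hl.
case: (classic (subset_of (fint l) m)) => sub.
  by apply: IH => // j Fj; apply: Hx; split=> //; apply: sub.
have [p [Fp nmp]] : exists p, fint l p /\ ~ m p.
  by apply: NNPP => nex; apply: sub => p Fp; apply: NNPP => nm; apply: nex; exists p.
have [Hmr nm1 mmax] := Hm.
have HK := rid_plus Hmr (rid_cyc p).
have msub : subset_of m (plus m (cyc p)).
  by move=> t mt; exists t, 0; split=> //; split; [exists 0; rewrite mulr0|rewrite addr0].
case: (mmax _ HK msub) => [Km|K1].
  exfalso; apply: nmp; apply: Km; exists 0, p; split; first exact: rid0.
  by split; [exists 1; rewrite mulr1|rewrite add0r].
have [t [e0 [mt [[s ->] E1]]]] := K1.
have Fe : fint l (p * s) by apply: ridM.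
set e := p * s in Fe E1 *.
have me : m (1 - e) by rewrite E1 addrK.
have -> : x = x * e + x * (1 - e) by rewrite mulrBr mulr1 addrC subrK.
apply: aclD.
  apply: acl_in; right; split; first exact: ridM.
  exists m; split=> // u mu; rewrite -mulrA; apply: Hx; split.
    have -> : e * u = u - (1 - e) * u by rewrite mulrBl mul1r opprB addrC subrK.
    by apply: ridB => //; apply: ridM.
  exact: ridM.
apply: IH => //; first exact: ridM.
move=> j Fj; rewrite -mulrA; apply: Hx; split; first exact: ridM.
have -> : (1 - e) * j = j - e * j by rewrite mulrBl mul1r.
by apply: ridB => //; apply: ridM.
Qed.
End Layer.

Section Layer2.
Variable S : pzRingType.
Variable Hart : right_artinian S.
Implicit Types A B C K N X Y F : S -> Prop.

Lemma layer A B : rid A -> rid B -> subset_of A B -> subset_of B (SG A B) -> fl A B.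
Proof.
move=> HA HB AB BSG; apply: NNPP => Hn.
pose Q K z := [/\ B z, ~ K z & gen A z].
have H : forall K, fl A K -> subset_of K B -> exists z, Q K z.
  move=> K HK KB; apply: NNPP => nex.
  have [_ HKr AK] := fl_prop HK.
  have BK : subset_of B K.
    move=> x Bx; apply: (acl_sub_rid HKr _ (BSG x Bx)).
    move=> y [Ay|[By gy]]; first exact: AK.
    by apply: NNPP => nKy; apply: nex; exists y; split.
  by apply: Hn; rewrite -(set_ext KB BK).
pose g K := epsilon (inhabits (0:S)) (Q K).
have gP K : (exists z, Q K z) -> Q K (g K) by apply: epsilon_spec.
pose F := fix F (n : nat) : S -> Prop :=
  if n is n'.+1 then plus (F n') (cyc (g (F n'))) else A.
have inv n : fl A (F n) /\ subset_of (F n) B.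
  elim: n => [|n [IH1 IH2]]; first by split; [apply: flR|].
  have [Bz nz gz] := gP _ (H _ IH1 IH2).
  have [_ HFr AF] := fl_prop IH1.
  split; first exact: (flS IH1 (gen_step HFr AF gz)).
  move=> x [f [b [Ff [[s ->] ->]]]]; apply: ridD => //; first by apply: IH2.
  exact: ridM.
pose z n := g (F n).
have Qz n : Q (F n) (z n) by apply: gP; exact: (H _ (inv n).1 (inv n).2).
have Fr n : rid (F n) by have [_ ? _] := fl_prop (inv n).1.
have AF n : subset_of A (F n) by have [_ _ ?] := fl_prop (inv n).1.
have Fup n : subset_of (F n) (F n.+1).
  move=> x Fx; exists x, 0; split=> //; split; last by rewrite addr0.
  by exists 0; rewrite mulr0.
pose Fo a := fix Fo (n : nat) : S -> Prop :=
  if n is n'.+1 then plus (Fo n') (cyc (z (a + n')%N)) else A.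
have Fo_rid a n : rid (Fo a n).
  by elim: n => [|n IH] //=; apply: rid_plus => //; apply: rid_cyc.
have Fo_up a n : subset_of (Fo a n) (Fo a n.+1).
  move=> x Fx; exists x, 0; split=> //; split; last by rewrite addr0.
  by exists 0; rewrite mulr0.
have AFo a n : subset_of A (Fo a n).
  by move=> x Ax; apply: (chain_up (Fo_up a) (leq0n n)).
have Fo_sub a n : subset_of (Fo a n) (F (a + n)%N).
  elim: n => [|n IH]; first by rewrite addn0.
  move=> x [f [b [Ff [[s ->] ->]]]]; rewrite addnS.
  by exists f, (z (a + n)%N * s); split; [apply: IH|split; [exists s|]].
pose G t := acl (fun x => A x \/ exists j s, (t <= j)%N /\ x = z j * s).
have Grid t : rid (G t).
  apply: acl_rid => x r [Ax|[j [s [le ->]]]]; first by left; apply: ridM.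
  by right; exists j, (s * r); rewrite mulrA.
have Gdown t : subset_of (G t.+1) (G t).
  apply: acl_sub_rid => // x [Ax|[j [s [le ->]]]]; apply: acl_in; first by left.
  by right; exists j, s; split=> //; apply: ltnW.
have [T0 HT0] := @Hart G Grid Gdown.
have E := setE (HT0 T0.+1 (leqnSn _)).
have GzT : G T0.+1 (z T0).
  by rewrite E; apply: acl_in; right; exists T0, 1; rewrite mulr1.
have [n0 Hn0] : exists n, Fo T0.+1 n (z T0).
  apply: (acl_ind (K := fun x => exists n, Fo T0.+1 n x) _ _ _ GzT).
  - by exists 0%N; apply: rid0.
  - move=> a b [n1 H1] [n2 H2]; exists (maxn n1 n2); apply: ridD => //.
      by apply: (chain_up (Fo_up _) (leq_maxl n1 n2)).
    by apply: (chain_up (Fo_up _) (leq_maxr n1 n2)).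
  - move=> x [Ax|[j [s [le ->]]]]; first by exists 0%N.
    exists (j - T0.+1).+1; exists 0, (z j * s); split; first exact: rid0.
    split; last by rewrite add0r.
    by exists s; rewrite subnKC.
have D : forall n, Fo T0.+1 n (z T0) -> A (z T0).
  elim=> [//|n IH] [h [w [Hh [[s ->] Ew]]]].
  set k := (T0.+1 + n)%N in Ew.
  have [_ nFk gk] := Qz k.
  have FzT : F T0.+1 (z T0).
    exists 0, (z T0); split; first exact: rid0.
    by split; [exists 1; rewrite mulr1|rewrite add0r].
  have Fk : F k (z k * s).
    have -> : z k * s = z T0 - h by rewrite Ew addrC addKr.
    apply: ridB => //; last by apply: Fo_sub.
    by apply: (chain_up Fup (leq_addr n T0.+1)).
  have Ak := gen_colon (Fr k) (AF k) gk Fk nFk.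
  apply: IH; rewrite Ew; apply: ridD => //; exact: AFo.
have [_ nF _] := Qz T0.
by apply: nF; apply: AF; apply: D Hn0.
Qed.
End Layer2.

Lemma art_fl (S : pzRingType) : right_artinian S -> fl (@zero S) (@full S).
Proof.
move=> Hart.
have [l0 [Hl0 HJ]] := J_exists Hart.
have Hlay n : fl (L l0 n.+1) (L l0 n).
  apply: (layer Hart (L_rid Hl0 _) (L_rid Hl0 _) (L_down Hl0 (n:=n))).
  move=> x Lx; apply: (in_SG (L_rid Hl0 _) (L_rid Hl0 _) Hl0 Lx) => j Jj.
  by apply: acl_in; exists x, j.
have Hn n : fl (L l0 n) (@full S).
  elim: n => [|n IH]; first exact: (flR (@rid_full S)).
  exact: (fl_trans (Hlay n) IH).
have [k Hk] := L_nil Hart Hl0 HJ.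
have -> : @zero S = L l0 k.
  apply: set_ext => x; last exact: Hk.
  by rewrite /zero => ->; apply: (rid0 (L_rid Hl0 k)).
exact: Hn.
Qed.

Lemma art_noeth (S : pzRingType) : right_artinian S -> right_noetherian S.
Proof.
move=> Hart I HI Hup.
have [m Hm] := fl_acc (art_fl Hart) HI Hup
   (fun n x (Hx : @zero S x) => ltac:(rewrite Hx; exact: (rid0 (HI n))))
   (fun n x _ => Logic.I).
by exists m => n le; rewrite (Hm n le) => x.
Qed.

Lemma sub_rid (S : pzRingType) (N : S -> Prop) :
  @submodule S ((S^c)^o : lmodType S^c) N <-> rid N.
Proof.
split; case=> H0 H1 H2; split => //.
  by move=> x r; exact: (H2 r x).
by move=> a x; exact: (H2 x a).
Qed.

Lemma fl_series (S : pzRingType) (A B : S -> Prop) : fl A B ->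
  exists n (C : nat -> S -> Prop), [/\ forall i, rid (C i), C 0%N = A, C n = B &
   forall i, (i < n)%N -> [/\ subset_of (C i) (C i.+1), ~ subset_of (C i.+1) (C i) &
     forall N, rid N -> subset_of (C i) N -> subset_of N (C i.+1) ->
       N = C i \/ N = C i.+1]].
Proof.
elim=> [A' HA|A' B' C' HAB [n [Cs [Hr H0 Hn Hs]]] [HB HC BC stp]].
  by exists 0%N, (fun _ => A'); split.
case: (classic (subset_of C' B')) => CB.
  have E : C' = B' by apply: set_ext.
  by exists n, Cs; split; rewrite ?E.
exists n.+1, (fun i => if i == n.+1 then C' else Cs i); split.
- by move=> i; case: (i == n.+1).
- by [].
- by rewrite eqxx.
move=> i; rewrite ltnS leq_eqVlt => /orP [/eqP ->|lt].
  by rewrite eqxx (ltn_eqF (ltnSn n)) Hn; split.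
rewrite eqSS (ltn_eqF lt) (ltn_eqF (leq_trans lt (leqnSn n))).
exact: Hs.
Qed.

Lemma art_fin_length (S : pzRingType) : right_artinian S ->
  finite_length ((S^c)^o : lmodType S^c).
Proof.
move=> Hart; have [n [C [Hr H0 Hn Hs]]] := fl_series (art_fl Hart).
exists n, C; split.
- by move=> i; apply/(@sub_rid S).
- by rewrite H0.
- by rewrite Hn.
move=> i lt; have [H1 H2 H3] := Hs i lt; split=> // N HN HiN HNi.
case: (H3 N (proj1 (@sub_rid S N) HN) HiN HNi) => ->; [left|right]; done.
Qed.

Lemma factor_art (R S : pzRingType) (f : {rmorphism R -> S}) :
  factor_ring f -> right_artinian R -> right_artinian S.
Proof.
move=> fs Hart I HI Hdown.
have HI' n : right_ideal (fun r => I n (f r)).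
  have [H0 H1 H2] := HI n; split.
  - by rewrite rmorph0.
  - by move=> x y Hx Hy; rewrite rmorphD; apply: H1.
  - by move=> x r Hx; rewrite rmorphM; apply: H2.
have [N HN] := Hart (fun n r => I n (f r)) HI' (fun n r => Hdown n (f r)).
exists N => n le s; have [r <-] := fs s; exact: (HN n le r).
Qed.

Lemma rhom0 (S : pzRingType) (A B : lmodType S^c) (f : A -> B) : rhom f -> f 0 = 0.
Proof.
move=> lf; have := lf 1 0 0; rewrite !scale1r addr0 => H.
by apply: (@addrI _ (f 0)); rewrite addr0 -H.
Qed.

Lemma rhomZ (S : pzRingType) (A B : lmodType S^c) (f : A -> B) c u :
  rhom f -> f (c *: u) = c *: f u.
Proof. by move=> lf; have := lf c u 0; rewrite !addr0 (rhom0 lf) addr0. Qed.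

Lemma rhom_comp (S : pzRingType) (A B C : lmodType S^c) (f : A -> B) (g : B -> C) :
  rhom f -> rhom g -> rhom (g \o f).
Proof. by move=> lf lg c u v /=; rewrite lf lg. Qed.

Lemma images_selfinj (S : pzRingType) : right_artinian S ->
  fl_images_of_injectives S -> right_self_injective S.
Proof.
move=> Hart Him.
have [E [p [injE [lp sp]]]] := Him _ (art_fin_length Hart).
have [e pe] := sp 1.
move=> A B f g lf injf lg.
pose sec := fun a : ((S^c)^o : lmodType S^c) => (a : S^c) *: e.
have lsec : rhom sec.
  move=> c u v; rewrite /sec.
  have -> : ((c *: u + v : (S^c)^o) : S^c) = c * (u : S^c) + v by [].
  by rewrite scalerDl scalerA.
have [h0 [lh0 Hh0]] := injE A B f (sec \o g) lf injf (rhom_comp lg lsec).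
exists (p \o h0); split; first exact: rhom_comp.
move=> a /=; rewrite Hh0 /= /sec (rhomZ _ _ lp) pe.
by rewrite /GRing.scale /=; rewrite mulr1.
Qed.

Fixpoint span (S : pzRingType) (M : lmodType S^c) (xs : seq M) : M -> Prop :=
  if xs is x :: xs' then fun m => exists a m', span xs' m' /\ m = a *: x + m'
  else fun m => m = 0.

Lemma inj_prod (S : pzRingType) (E1 E2 : lmodType S^c) :
  injective_module E1 -> injective_module E2 ->
  injective_module ((E1 * E2)%type : lmodType S^c).
Proof.
move=> i1 i2 A B f g lf injf lg.
have l1 : rhom (fun a => (g a).1) by move=> c u v; rewrite lg.
have l2 : rhom (fun a => (g a).2) by move=> c u v; rewrite lg.
have [h1 [lh1 H1]] := i1 A B f _ lf injf l1.
have [h2 [lh2 H2]] := i2 A B f _ lf injf l2.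
exists (fun b => (h1 b, h2 b)); split.
  by move=> c u v; rewrite lh1 lh2.
by move=> a; rewrite H1 H2; case: (g a).
Qed.

Lemma span_img (S : pzRingType) (M : lmodType S^c) :
  right_self_injective S -> forall xs : seq M,
  exists (E : lmodType S^c) (p : E -> M),
    [/\ injective_module E, rhom p & forall m, span xs m -> exists e, p e = m].
Proof.
move=> Hsi; elim=> [|x xs [E [p [iE lp sp]]]].
  exists ((S^c)^o : lmodType S^c), (fun _ => 0); split => //.
    by move=> c u v; rewrite scaler0 addr0.
  by move=> m /= ->; exists 0.
exists ((((S^c)^o : lmodType S^c) * E)%type : lmodType S^c).
exists (fun ae => (ae.1 : S^c) *: x + p ae.2); split.
- exact: inj_prod.
- move=> c [a e] [a' e'] /=; rewrite lp.
  have -> : ((c *: a + a' : (S^c)^o) : S^c) = c * (a : S^c) + a' by [].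
  rewrite scalerDl scalerDr scalerA [RHS]addrACA.
  reflexivity.
- move=> m /= [a [m' [Hm' ->]]]; have [e <-] := sp m' Hm'.
  by exists (a : (S^c)^o, e).
Qed.

Lemma fl_span (S : pzRingType) (M : lmodType S^c) :
  finite_length M -> exists xs : seq M, forall m, span xs m.
Proof.
move=> [n [C [Hsub H0 Hn Hs]]].
have key i : (i <= n)%N -> exists xs : seq M, forall m, C i m -> span xs m.
  elim: i => [_|i IH lt]; first by exists [::] => m /H0.
  have [xs Hxs] := IH (ltnW lt).
  have [H1 H2 H3] := Hs i lt.
  have [x [Cx nCx]] : exists x, C i.+1 x /\ ~ C i x.
    by apply: NNPP => nex; apply: H2 => x Cx; apply: NNPP => nC; apply: nex; exists x.
  have [c0 cD cZ] := Hsub i.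
  have [d0 dD dZ] := Hsub i.+1.
  pose N := fun m => exists a c, C i c /\ m = a *: x + c.
  have HN : submodule N.
    split.
    - by exists 0, 0; rewrite scale0r addr0.
    - move=> u v [a [c [Cc ->]]] [a' [c' [Cc' ->]]]; exists (a + a'), (c + c').
      by rewrite scalerDl addrACA; split=> //; apply: cD.
    - move=> b u [a [c [Cc ->]]]; exists (b * a), (b *: c).
      by rewrite scalerDr scalerA; split=> //; apply: cZ.
  have iN : subset_of (C i) N by move=> c Cc; exists 0, c; rewrite scale0r add0r.
  have Ni : subset_of N (C i.+1).
    by move=> m [a [c [Cc ->]]]; apply: dD; [apply: dZ|apply: H1].
  case: (H3 N HN iN Ni) => E.
    by exfalso; apply: nCx; apply/E; exists 1, 0; rewrite scale1r addr0; split.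
  exists (x :: xs) => m /E [a [c [Cc ->]]].
  by exists a, c; split=> //; apply: Hxs.
have [xs Hxs] := key n (leqnn n).
by exists xs => m; apply: Hxs; apply/Hn.
Qed.

Lemma selfinj_images (S : pzRingType) :
  right_self_injective S -> fl_images_of_injectives S.
Proof.
move=> Hsi M HM; have [xs Hxs] := fl_span HM.
have [E [p [iE lp sp]]] := span_img Hsi xs.
by exists E, p; split=> //; split=> // m; apply: sp.
Qed.

Local Close Scope ring_scope.
Unset Implicit Arguments.

Theorem mainTheorem15 (R : pzRingType) :
  right_artinian R ->
  ((forall (S : pzRingType) (f : {rmorphism R -> S}),
       factor_ring f -> fl_images_of_injectives S)
   <->
   (forall (S : pzRingType) (f : {rmorphism R -> S}),
       factor_ring f -> QF S)).
Proof.
move=> Hart; split=> H S f fS.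
  have HS := factor_art fS Hart.
  split; first exact: art_noeth.
  exact: images_selfinj (H S f fS).
exact: selfinj_images (H S f fS).2.
Qed.
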